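(* Let $T:V\to\mathfrak g$ be an $\mathcal O$-operator on a Lie algebra $\mathfrak g$ with respect to a representation $(V;\rho)$. Then for every $k\ge0$ and every $f\in\mathrm{Hom}(\wedge^kV,\mathfrak g)$, $d_{\bar\rho}f=(-1)^k[\![T,f]\!]$.
   Context: An $\mathcal O$-operator: linear $T:V\to\mathfrak g$ with $[Tu,Tv]=T(\rho(Tu)(v)-\rho(Tv)(u))$. Set $[u,v]_T=\rho(Tu)(v)-\rho(Tv)(u)$ (a Lie bracket on $V$) and $\bar\rho(u)(x)=[Tu,x]+T\rho(x)(u)$, a representation of $(V,[\cdot,\cdot]_T)$ on $\mathfrak g$. $d_{\bar\rho}:\mathrm{Hom}(\wedge^kV,\mathfrak g)\to\mathrm{Hom}(\wedge^{k+1}V,\mathfrak g)$ is the Chevalley–Eilenberg coboundary: $d_{\bar\rho}f(u_1,\dots,u_{k+1})=\sum_{i}(-1)^{i+1}[Tu_i,f(u_1,\dots,\hat u_i,\dots,u_{k+1})]+\sum_i(-1)^{i+1}T\rho(f(u_1,\dots,\hat u_i,\dots,u_{k+1}))(u_i)+\sum_{i<j}(-1)^{i+j}f([u_i,u_j]_T,u_1,\dots,\hat u_i,\dots,\hat u_j,\dots,u_{k+1})$. The bracket $[\![\cdot,\cdot]\!]$ on $\bigoplus_k\mathrm{Hom}(\wedge^kV,\mathfrak g)$ is $[\![P,Q]\!](u_1,\dots,u_{m+n})=\sum_{\sigma\in\mathbb S_{(m,1,n-1)}}(-1)^{\sigma}P(\rho(Q(u_{\sigma(1)},\dots,u_{\sigma(m)}))u_{\sigma(m+1)},u_{\sigma(m+2)},\dots,u_{\sigma(m+n)})-(-1)^{mn}\sum_{\sigma\in\mathbb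 S_{(n,1,m-1)}}(-1)^{\sigma}Q(\rho(P(u_{\sigma(1)},\dots,u_{\sigma(n)}))u_{\sigma(n+1)},u_{\sigma(n+2)},\dots,u_{\sigma(m+n)})+(-1)^{mn}\sum_{\sigma\in\mathbb S_{(n,m)}}(-1)^{\sigma}[P(u_{\sigma(1)},\dots,u_{\sigma(n)}),Q(u_{\sigma(n+1)},\dots,u_{\sigma(m+n)})]$ for $P\in\mathrm{Hom}(\wedge^nV,\mathfrak g)$, $Q\in\mathrm{Hom}(\wedge^mV,\mathfrak g)$, where $\mathbb S_{(i_1,\dots,i_k)}$ denotes unshuffles (permutations increasing on consecutive blocks of the given sizes). *)

(* Defs.v *)
From HB Require Import structures.
From mathcomp Require Import all_boot all_order all_algebra all_fingroup.
Set Implicit Arguments. Unset Strict Implicit. Unset Printing Implicit Defensive.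
Import GRing.Theory.
Local Open Scope ring_scope.

Definition is_lie_bracket (K : fieldType) (g : lmodType K) (br : g -> g -> g) : Prop :=
  [/\ (forall (a : K) x y z, br (a *: x + y) z = a *: br x z + br y z),
      (forall (a : K) x y z, br z (a *: x + y) = a *: br z x + br z y),
      (forall x, br x x = 0) &
      (forall x y z, br x (br y z) + br y (br z x) + br z (br x y) = 0)].

Definition is_rep (K : fieldType) (g V : lmodType K) (br : g -> g -> g)
  (rho : g -> V -> V) : Prop :=
  [/\ (forall (a : K) x u v, rho x (a *: u + v) = a *: rho x u + rho x v),
      (forall (a : K) x y v, rho (a *: x + y) v = a *: rho x v + rho y v) &
      (forall x y v, rho (br x y) v = rho x (rho y v) - rho y (rho x v))].

Definition is_O_operator (K : fieldType) (g V : lmodType K) (br : g -> g -> g)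
  (rho : g -> V -> V) (T : V -> g) : Prop :=
  (forall (a : K) u v, T (a *: u + v) = a *: T u + T v) /\
  (forall u v, br (T u) (T v) = T (rho (T u) v - rho (T v) u)).

Definition bracketT (K : fieldType) (g V : lmodType K) (rho : g -> V -> V)
  (T : V -> g) (u v : V) : V := rho (T u) v - rho (T v) u.

(* Elements of Hom(wedge^k V, g) are represented by f : seq V -> g, of which
   only the values on lists of length k matter; f must be k-linear and alternating. *)
Definition is_cochain (K : fieldType) (g V : lmodType K) (k : nat)
  (f : seq V -> g) : Prop :=
  (forall (u : seq V) (i : nat) (a : K) (x y : V), size u = k -> (i < k)%N ->
     f (set_nth 0 u i (a *: x + y)) = a *: f (set_nth 0 u i x) + f (set_nth 0 u i y)) /\
  (forall (u : seq V) (i j : nat), size u = k -> (i < j)%N -> (j < k)%N ->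
     nth 0 u i = nth 0 u j -> f u = 0).

Definition rem_at (T : Type) (i : nat) (s : seq T) : seq T := take i s ++ drop i.+1 s.

(* Chevalley–Eilenberg coboundary d_{rhobar} f, evaluated at u = (u_1,...,u_{k+1})
   (0-indexed: sign (-1)^{i+1} for 1-indexed i becomes (-1)^i). *)
Definition dcob (K : fieldType) (g V : lmodType K) (br : g -> g -> g)
  (rho : g -> V -> V) (T : V -> g) (k : nat) (f : seq V -> g) (u : seq V) : g :=
  \sum_(i < k.+1) ((-1 : K) ^+ i) *: br (T (nth 0 u i)) (f (rem_at i u))
  + \sum_(i < k.+1) ((-1 : K) ^+ i) *: T (rho (f (rem_at i u)) (nth 0 u i))
  + \sum_(i < k.+1) \sum_(j < k.+1 | (i < j)%N)
      ((-1 : K) ^+ (i + j)) *: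
        f (bracketT rho T (nth 0 u i) (nth 0 u j) :: rem_at i (rem_at j u)).

(* s is an unshuffle of type (bs_1, ..., bs_r): increasing on consecutive blocks *)
Definition unshuffle (N : nat) (bs : seq nat) (s : 'S_N) : bool :=
  (sumn bs == N) && all (sorted ltn) (reshape bs [seq nat_of_ord (s i) | i <- enum 'I_N]).

Definition pargs (V : zmodType) (N : nat) (s : 'S_N) (u : seq V) : seq V :=
  [seq nth 0 u (s i) | i <- enum 'I_N].

(* The bracket [[P,Q]] for P of arity n and Q of arity m, evaluated at
   u = (u_1, ..., u_{m+n}). *)
Definition bigbr (K : fieldType) (g V : lmodType K) (br : g -> g -> g)
  (rho : g -> V -> V) (n m : nat) (P Q : seq V -> g) (u : seq V) : g :=
  \sum_(s : 'S_(m + n) | unshuffle [:: m; 1%N; n.-1] s)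
     ((-1 : K) ^+ odd_perm s) *:
       P (rho (Q (take m (pargs s u))) (nth 0 (pargs s u) m) :: drop m.+1 (pargs s u))
  - ((-1 : K) ^+ (m * n)) *:
    \sum_(s : 'S_(m + n) | unshuffle [:: n; 1%N; m.-1] s)
     ((-1 : K) ^+ odd_perm s) *:
       Q (rho (P (take n (pargs s u))) (nth 0 (pargs s u) n) :: drop n.+1 (pargs s u))
  + ((-1 : K) ^+ (m * n)) *:
    \sum_(s : 'S_(m + n) | unshuffle [:: n; m] s)
     ((-1 : K) ^+ odd_perm s) *: br (P (take n (pargs s u))) (Q (drop n (pargs s u))).

(* T viewed as an element of Hom(wedge^1 V, g) *)
Definition cochain_of (K : fieldType) (g V : lmodType K) (T : V -> g) : seq V -> g :=
  fun l => T (nth 0 l 0).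

(* Main.v *)
Require Import Defs.
From HB Require Import structures.
From mathcomp Require Import all_boot all_order all_algebra all_fingroup.
From mathcomp Require Import zify ring.
Import GRing.Theory.
Local Open Scope ring_scope.
Set Warnings "-notation-overridden,-ambiguous-paths".
Set Implicit Arguments. Unset Strict Implicit. Unset Printing Implicit Defensive.

Lemma nth_rem_at (V : Type) (x0 : V) (i j : nat) (u : seq V) :
  nth x0 (rem_at i u) j = nth x0 u (bump i j).
Proof.
rewrite /rem_at /bump.
case: (ltnP i (size u)) => hi.
  rewrite nth_cat size_take hi.
  case: (ltnP j i) => hj.
    by rewrite nth_take // ltnNge (ltnW hj) /= add0n.
  by rewrite nth_drop addSn subnKC.
rewrite take_oversize // drop_oversize ?cats0; last by apply: (leq_trans hi).
case: (leqP i j) => hj //=.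
by rewrite !nth_default //; apply: leq_trans hi _; rewrite ?hj // ltnW.
Qed.

Lemma size_rem_at (V : Type) (i : nat) (u : seq V) :
  (i < size u)%N -> size (rem_at i u) = (size u).-1.
Proof.
move=> hi; rewrite /rem_at size_cat size_take size_drop hi.
lia.
Qed.

Lemma rem_at_cons (V : Type) (i : nat) (x : V) (s : seq V) :
  rem_at i (x :: s) = if i is i'.+1 then x :: rem_at i' s else s.
Proof. by case: i => [|i] ; rewrite /rem_at /= ?drop0. Qed.

Lemma rem_at_comm (V : Type) (a b : nat) (u : seq V) : (a <= b)%N ->
  rem_at b (rem_at a u) = rem_at a (rem_at b.+1 u).
Proof.
elim: u a b => [|x s IH] a b hab; first by rewrite /rem_at.
case: a hab => [|a] hab.
  rewrite !rem_at_cons /=; by [].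
case: b hab => // b hab.
by rewrite !rem_at_cons IH.
Qed.

Lemma map_nth_bump (V : Type) (x0 : V) (i k : nat) (u : seq V) :
  size u = k.+1 -> (i < k.+1)%N ->
  [seq nth x0 u (bump i j) | j <- iota 0 k] = rem_at i u.
Proof.
move=> hu hi.
rewrite -(@eq_map _ _ (nth x0 (rem_at i u))); last by move=> j; rewrite nth_rem_at.
rewrite map_nth_iota0; last by rewrite size_rem_at hu.
by rewrite take_oversize // size_rem_at hu.
Qed.

Definition Lv N (s : 'S_N) : seq nat := [seq nat_of_ord (s i) | i <- enum 'I_N].

Lemma Lv_lift0 N (i : 'I_N.+1) (t : 'S_N) :
  Lv (lift_perm ord0 i t) = (i : nat) :: [seq bump i (t j) | j <- enum 'I_N].
Proof.
rewrite /Lv enum_ordSl /= lift_perm_id -map_comp; congr (_ :: _).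
by apply: eq_map => j /=; rewrite lift_perm_lift.
Qed.

Lemma Lv_liftmax N (i : 'I_N.+1) (t : 'S_N) :
  Lv (lift_perm ord_max i t) = rcons [seq bump i (t j) | j <- enum 'I_N] (i : nat).
Proof.
rewrite /Lv enum_ordSr map_rcons lift_perm_id -map_comp; congr rcons.
apply: eq_map => j /=.
have -> : widen_ord (leqnSn N) j = lift ord_max j.
  by apply: val_inj => /=; rewrite /bump leqNgt ltn_ord.
by rewrite lift_perm_lift.
Qed.

Lemma sorted_perm_eq1 N (t : 'S_N) :
  sorted ltn [seq nat_of_ord (t j) | j <- enum 'I_N] = (t == 1%g).
Proof.
apply/idP/eqP => [hs|->]; last first.
  by rewrite (@eq_map _ _ _ val) ?val_enum_ord ?iota_ltn_sorted // => j; rewrite perm1.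
have E : [seq nat_of_ord (t j) | j <- enum 'I_N] = iota 0 N.
  apply: (irr_sorted_eq ltn_trans ltnn hs (iota_ltn_sorted 0 N)) => x.
  rewrite mem_iota add0n /=; apply/mapP/idP => [[j _ ->]|hx]; first by [].
  by exists (t^-1 (Ordinal hx))%g; rewrite ?mem_enum // permKV.
apply/permP => j; apply: val_inj; rewrite perm1.
have := congr1 (fun s => nth 0%N s j) E.
by rewrite nth_iota // (nth_map j) ?size_enum_ord // nth_ord_enum.
Qed.

Lemma sorted_bump N (i : nat) (t : 'S_N) :
  sorted ltn [seq bump i (t j) | j <- enum 'I_N] = (t == 1%g).
Proof.
rewrite -sorted_perm_eq1.
have -> : [seq bump i (t j) | j <- enum 'I_N] =
  map (bump i) [seq nat_of_ord (t j) | j <- enum 'I_N] by rewrite -map_comp.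
by rewrite (@mono_sorted _ _ _ ltn ltn) // => x y /=; rewrite !ltnNge leq_bump2.
Qed.

Lemma sum_liftperm (M : zmodType) N (i0 : 'I_N.+1) (P : pred 'S_N.+1)
  (F : 'S_N.+1 -> M) :
  \sum_(s | P s) F s =
  \sum_(j : 'I_N.+1) \sum_(t : 'S_N | P (lift_perm i0 j t)) F (lift_perm i0 j t).
Proof.
rewrite (partition_big (fun s : 'S_N.+1 => s i0) predT) //=.
apply: eq_bigr => j0 _.
rewrite (reindex (lift_perm i0 j0)); last first.
  pose ulsf i (s : 'S_N.+1) k := odflt k (unlift (s i) (s (lift i k))).
  have ulsfK i (s : 'S_N.+1) k: lift (s i) (ulsf i s k) = s (lift i k).
    rewrite /ulsf; have:= neq_lift i k.
    by rewrite -(can_eq (permK s)) => /unlift_some[] ? ? ->.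
  have inj_ulsf: injective (ulsf i0 _).
    move=> s; apply: can_inj (ulsf (s i0) s^-1%g) _ => k'.
    by rewrite {1}/ulsf ulsfK !permK liftK.
  exists (fun s => perm (inj_ulsf s)) => [s _ | s].
    by apply/permP=> k'; rewrite permE /ulsf lift_perm_lift lift_perm_id liftK.
  move=> /andP[_ /eqP si0]; apply/permP=> k.
  case: (unliftP i0 k) => [k'|] ->; rewrite ?lift_perm_id //.
  by rewrite lift_perm_lift -si0 permE ulsfK.
by apply: eq_bigl => t; rewrite lift_perm_id eqxx andbT.
Qed.

Lemma pargs_Lv (V : zmodType) N (s : 'S_N) (u : seq V) :
  pargs s u = [seq nth 0 u j | j <- Lv s].
Proof. by rewrite /pargs /Lv -map_comp. Qed.

Lemma pargs_lift0 (V : zmodType) N (a : 'I_N.+1) (t : 'S_N) (u : seq V) :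
  pargs (lift_perm ord0 a t) u = nth 0 u a :: pargs t (rem_at a u).
Proof.
rewrite !pargs_Lv Lv_lift0 /=; congr cons; rewrite /Lv -!map_comp.
by apply: eq_map => j /=; rewrite nth_rem_at.
Qed.

Lemma pargs_liftmax (V : zmodType) N (a : 'I_N.+1) (t : 'S_N) (u : seq V) :
  pargs (lift_perm ord_max a t) u = rcons (pargs t (rem_at a u)) (nth 0 u a).
Proof.
rewrite !pargs_Lv Lv_liftmax map_rcons; congr rcons; rewrite /Lv -!map_comp.
by apply: eq_map => j /=; rewrite nth_rem_at.
Qed.

Lemma pargs1 (V : zmodType) N (u : seq V) : size u = N -> pargs (1%g : 'S_N) u = u.
Proof.
move=> hu; rewrite /pargs (@eq_map _ _ _ (nth 0 u \o val)); last by move=> j; rewrite perm1.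
by rewrite map_comp val_enum_ord map_nth_iota0 ?hu // take_oversize ?hu.
Qed.

Lemma unshuffleE N bs (s : 'S_N) :
  unshuffle bs s = (sumn bs == N) && all (sorted ltn) (reshape bs (Lv s)).
Proof. by []. Qed.

Lemma unshC k (i : 'I_k.+1) (t : 'S_k) :
  unshuffle [:: 1%N; k] (lift_perm ord0 i t) = (t == 1%g).
Proof.
rewrite unshuffleE Lv_lift0 /= addn0 eqxx /= ?take0 ?drop0 /= take_oversize ?sorted_bump ?andbT //.
by rewrite size_map size_enum_ord.
Qed.

Lemma unshA k (i : 'I_k.+1) (t : 'S_k) :
  unshuffle [:: k; 1%N; 0%N] (lift_perm ord_max i t) = (t == 1%g).
Proof.
rewrite unshuffleE Lv_liftmax -(sorted_bump i t) -cats1.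
have : size [seq bump i (t j) | j <- enum 'I_k] = k by rewrite size_map size_enum_ord.
set M := [seq bump i (t j) | j <- enum 'I_k] => hs.
rewrite /= addn0 addn1 eqxx /=.
by rewrite (drop_size_cat _ hs) /= (take_size_cat _ hs) andbT.
Qed.

Lemma unshB k (a : 'I_k.+2) (b : 'I_k.+1) (t : 'S_k) :
  unshuffle [:: 1%N; 1%N; k] (lift_perm ord0 a (lift_perm ord0 b t)) = (t == 1%g).
Proof.
rewrite unshuffleE Lv_lift0 /= addn0 eqxx /=.
have -> : [seq bump a (lift_perm ord0 b t j) | j <- enum 'I_k.+1] =
   map (bump a) (Lv (lift_perm ord0 b t)) by rewrite /Lv -map_comp.
rewrite Lv_lift0 /= take0 drop0 /= take_oversize; last by rewrite !size_map -enumT size_enum_ord.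
rewrite (@mono_sorted _ _ _ ltn ltn) ?sorted_bump ?andbT // => x y /=.
by rewrite !ltnNge leq_bump2.
Qed.

Section Sums.
Variables (K : fieldType) (V M : lmodType K).

Lemma sumC k (u : seq V) (F : seq V -> M) : size u = k.+1 ->
  \sum_(s : 'S_k.+1 | unshuffle [:: 1%N; k] s) ((-1 : K) ^+ odd_perm s) *: F (pargs s u)
  = \sum_(i < k.+1) ((-1 : K) ^+ i) *: F (nth 0 u i :: rem_at i u).
Proof.
move=> hu; rewrite (sum_liftperm ord0); apply: eq_bigr => i _.
rewrite (eq_bigl (fun t => t == 1%g)) => [|t]; last by rewrite unshC.
rewrite big_pred1_eq odd_lift_perm odd_perm1 addbF signr_odd pargs_lift0 pargs1 //.
by rewrite size_rem_at hu.
Qed.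

Lemma sumA k (u : seq V) (F : seq V -> M) : size u = k.+1 ->
  \sum_(s : 'S_k.+1 | unshuffle [:: k; 1%N; 0%N] s) ((-1 : K) ^+ odd_perm s) *: F (pargs s u)
  = \sum_(i < k.+1) ((-1 : K) ^+ (k + i)) *: F (rcons (rem_at i u) (nth 0 u i)).
Proof.
move=> hu; rewrite (sum_liftperm ord_max); apply: eq_bigr => i _.
rewrite (eq_bigl (fun t => t == 1%g)) => [|t]; last by rewrite unshA.
rewrite big_pred1_eq odd_lift_perm odd_perm1 addbF -oddD signr_odd pargs_liftmax pargs1 //.
by rewrite size_rem_at hu.
Qed.

Lemma sumB k (u : seq V) (F : seq V -> M) : size u = k.+2 ->
  \sum_(s : 'S_k.+2 | unshuffle [:: 1%N; 1%N; k] s) ((-1 : K) ^+ odd_perm s) *: F (pargs s u)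
  = \sum_(a < k.+2) \sum_(b < k.+1) ((-1 : K) ^+ (a + b)) *:
       F (nth 0 u a :: nth 0 (rem_at a u) b :: rem_at b (rem_at a u)).
Proof.
move=> hu; rewrite (sum_liftperm ord0); apply: eq_bigr => a _.
rewrite (sum_liftperm ord0); apply: eq_bigr => b _.
rewrite (eq_bigl (fun t => t == 1%g)) => [|t]; last by rewrite unshB.
rewrite big_pred1_eq !odd_lift_perm odd_perm1 /= addbF -oddD signr_odd.
rewrite !pargs_lift0 pargs1 //.
by rewrite size_rem_at size_rem_at hu // size_rem_at hu.
Qed.

End Sums.

Theorem proposition3p3 (K : fieldType) (g V : lmodType K) (br : g -> g -> g)
  (rho : g -> V -> V) (T : V -> g) :
  is_lie_bracket br -> is_rep br rho -> is_O_operator br rho T ->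
  forall (k : nat) (f : seq V -> g), is_cochain k f ->
  forall u : seq V, size u = k.+1 ->
    dcob br rho T k f u = ((-1 : K) ^+ k) *: bigbr br rho 1%N k (cochain_of T) f u.
Proof.
move=> hL hR hO k f hf u hu.
rewrite /bigbr.
have e : k.+1 = (k + 1)%N by rewrite addn1.
case: (k + 1)%N / e.
rewrite muln1.
rewrite (sumA (fun L => cochain_of T (rho (f (take k L)) (nth 0 L k) :: drop k.+1 L))) //.
rewrite (sumC (fun L => br (cochain_of T (take 1 L)) (f (drop 1 L)))) //.
have sq : (-1 : K) ^+ k * (-1) ^+ k = 1 by rewrite -exprD -signr_odd oddD addbb.
rewrite /dcob scalerDr scalerBr !scalerA sq !scale1r.
rewrite scaler_sumr.
have hsz : forall i : 'I_k.+1, size (rem_at i u) = k.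
  by move=> i; rewrite size_rem_at hu.
have -> : \sum_(i < k.+1) (-1) ^+ k *: ((-1 : K) ^+ (k + i) *:
     cochain_of T (rho (f (take k (rcons (rem_at i u) u`_i))) (rcons (rem_at i u) u`_i)`_k
        :: drop k.+1 (rcons (rem_at i u) u`_i))) =
   \sum_(i < k.+1) (-1 : K) ^+ i *: T (rho (f (rem_at i u)) u`_i).
  apply: eq_bigr => i _; rewrite scalerA exprD signrMK /cochain_of /=.
  by rewrite -cats1 (take_size_cat _ (hsz i)) nth_cat hsz ltnn subnn.
have -> : \sum_(i < k.+1) (-1 : K) ^+ i *: br (cochain_of T (take 1 (u`_i :: rem_at i u)))
       (f (drop 1 (u`_i :: rem_at i u))) =
   \sum_(i < k.+1) (-1 : K) ^+ i *: br (T u`_i) (f (rem_at i u)).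
  by apply: eq_bigr => i _; rewrite /cochain_of /= drop0.
match goal with |- _ + _ + ?A = _ - ?B + _ =>
  suff -> : A = - B by rewrite [RHS]addrC addrA end.
case: k f hf u hu hsz sq => [|k] f hf u hu hsz sq.
  rewrite [X in _ = - X]big_pred0; last by move=> s; rewrite /unshuffle.
  rewrite oppr0 big1 // => i _; apply: big_pred0 => j.
  by case: i j => [[|i] hi] [[|j] hj].
rewrite /= (sumB (fun L => f (rho (cochain_of T (take 1 L)) (nth 0 L 1) :: drop 2 L))) //.
rewrite [X in _ = - X](eq_bigr (fun a : 'I_k.+2 => \sum_(b < k.+1) (-1 : K) ^+ (a + b) *:
   f (rho (T u`_a) (rem_at a u)`_b :: rem_at b (rem_at a u)))); last first.
  by move=> a _; apply: eq_bigr => b _; rewrite /cochain_of /= ?drop0.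
have flin : forall x y r, size r = k -> f (y - x :: r) = f (y :: r) - f (x :: r).
  move=> x y r hr; have H := (proj1 hf) (0 :: r) 0%N (-1) x y; rewrite /= hr in H.
  have -> : y - x = (-1) *: x + y by rewrite scaleN1r addrC.
  by rewrite (H erefl isT) scaleN1r addrC.
pose h (a c : nat) := (-1 : K) ^+ (a + c) *:
   f (rho (T (nth 0 u a)) (nth 0 u c) :: rem_at (minn a c) (rem_at (maxn a c) u)).
have step2 : forall i j : 'I_k.+2, (i < j)%N ->
   (-1 : K) ^+ (i + j) *: f (bracketT rho T u`_i u`_j :: rem_at i (rem_at j u)) = h i j - h j i.
  move=> i j hij; rewrite /bracketT flin; last first.
    have := ltn_ord j; rewrite size_rem_at size_rem_at ?hu //=; move: (ltn_ord j) hij; lia.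
  rewrite scalerBr /h (minn_idPl (ltnW hij)) (maxn_idPr (ltnW hij)).
  by rewrite minnC maxnC (minn_idPl (ltnW hij)) (maxn_idPr (ltnW hij)) addnC.
have step1 : forall a : 'I_k.+2,
   \sum_(b < k.+1) (-1 : K) ^+ (a + b) *: f (rho (T u`_a) (rem_at a u)`_b :: rem_at b (rem_at a u))
   = \sum_(c < k.+2 | (c < a)%N) h a c - \sum_(c < k.+2 | (a < c)%N) h a c.
  move=> a.
  pose G (c : 'I_k.+2) := if (c < a)%N then h a c else - h a c.
  transitivity (\sum_(b < k.+1) G (lift a b)).
    apply: eq_bigr => b _; rewrite /G /h /= nth_rem_at /bump.
    case: (leqP a b) => hab.
      rewrite add1n ltnNge (leqW hab) /= (minn_idPl (leqW hab)) (maxn_idPr (leqW hab)).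
      by rewrite rem_at_comm // addnS exprS mulN1r scaleNr opprK.
    by rewrite add0n hab (minn_idPr (ltnW hab)) (maxn_idPl (ltnW hab)).
  transitivity (\sum_(c < k.+2 | c != a) G c).
    symmetry; rewrite big_mkcond (bigD1_ord a) //= eqxx add0r.
    by apply: eq_bigr => b _; rewrite lift_eqF.
  rewrite (bigID (fun c : 'I_k.+2 => (c < a)%N)) /= -sumrN.
  congr (_ + _); apply: eq_big => c.
  - by rewrite -(inj_eq val_inj) /=; case: ltngtP.
  - by rewrite /G => /andP[_ ->].
  - by rewrite -(inj_eq val_inj) /=; case: ltngtP.
  - by rewrite /G => /andP[_ /negbTE ->].
transitivity (\sum_(i < k.+2) \sum_(j < k.+2 | (i < j)%N) (h i j - h j i)).
  by apply: eq_bigr => i _; apply: eq_bigr => j hij; rewrite step2.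
rewrite [X in _ = - X](eq_bigr _ (fun a _ => step1 a)).
rewrite sumrB opprB.
under eq_bigr => i _ do rewrite sumrB.
rewrite sumrB; congr (_ - _).
under eq_bigr => a _ do rewrite big_mkcond.
under [RHS]eq_bigr => a _ do rewrite big_mkcond.
by rewrite exchange_big.
Qed.
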